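(* Let $d\ge 1$ and let $\mathcal{G}\in\mathbb{R}^{N_1\times\cdots\times N_d\times T}$ be a real tensor of order $d+1$. For each $n\in\{1,\dots,d\}$ let $1\le r_n<N_n$, and let $\Phi_n\in\mathbb{R}^{N_n\times r_n}$ be the matrix whose columns are the $r_n$ leading left singular vectors of the mode-$n$ unfolding $G_{(n)}$, i.e. the left factor of a truncated rank-$r_n$ SVD $G_{(n)}\approx \Phi_n\Sigma_{r_n}^{(n)}(V_{r_n}^{(n)})^\top$. Let $S_n\in\mathbb{R}^{N_n\times r_n}$ be obtained from a column-pivoted QR factorization $\Phi_n^\top[P_1^{(n)}\ P_2^{(n)}]=Q_1^{(n)}[R_{11}^{(n)}\ R_{12}^{(n)}]$ (with $[P_1^{(n)}\ P_2^{(n)}]$ an $N_n\times N_n$ permutation matrix) by setting $S_n:=P_1^{(n)}$, the first $r_n$ columns of the permutation matrix, and assume that $S_n^\top\Phi_n$ is invertible for every $1\le n\le d$. Define the matrices $\Pi_n:=\Phi_n(S_n^\top\Phi_n)^{-1}S_n^\top\in\mathbb{R}^{N_n\times N_n}$. Then $$\bigl\|\mathcal{G}-\mathcal{G}\times_1\Pi_1\times_2\Pi_2\cdots\times_d\Pi_d\bigr\|_F\;\le\;\Bigl(\prod_{n=1}^d\bigl\|(S_n^\top\Phi_n)^{-1}\bigr\|_2\Bigr)\Bigl(\sum_{n=1}^d\sum_{k>r_n}\sigma_k^2\bigl(G_{(n)}\bigr)\Bigr)^{1/2},$$ where $\sigma_k(G_{(n)})$ denotes the $k$-th largest singular value of 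$G_{(n)}$.
   Context: For a tensor $\mathcal{G}$ of order $m$ with entries $g_{i_1,\dots,i_m}$, the mode-$n$ unfolding (matricization) $G_{(n)}$ is the matrix whose rows are indexed by $i_n$ and whose columns are indexed by all remaining indices $(i_j)_{j\neq n}$ (in a fixed ordering). The mode-$n$ product of $\mathcal{G}$ with a matrix $M\in\mathbb{R}^{R\times N_n}$ is the tensor $\mathcal{Y}=\mathcal{G}\times_n M$ with entries $y_{i_1,\dots,j,\dots,i_m}=\sum_{k}g_{i_1,\dots,k,\dots,i_m}m_{jk}$ ($j$ in position $n$), equivalently $Y_{(n)}=MG_{(n)}$; products in distinct modes commute. $\|\mathcal{G}\|_F^2=\sum g_{i_1,\dots,i_m}^2$ is the Frobenius norm and $\|\cdot\|_2$ is the spectral norm of a matrix. Note that only the first $d$ (spatial) modes are multiplied; mode $d+1$ (of size $T$) is left unchanged. *)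

(* Defs.v *)
From HB Require Import structures.
From mathcomp Require Import all_boot all_order all_algebra perm.
From mathcomp Require Import boolp classical_sets reals.
Unset Printing Implicit Defensive.
Import Order.TTheory GRing.Theory Num.Theory.
Local Open Scope ring_scope.

Definition midx (d : nat) (N : 'I_d -> nat) := {dffun forall m : 'I_d, 'I_(N m)}.

Section Tensors.
Variable R : realType.
Variables (d : nat) (N : 'I_d -> nat) (T : nat).

Local Notation midx := {dffun forall m : 'I_d, 'I_(N m)}.

(* order-(d+1) tensor in R^{N_1 x ... x N_d x T}; last mode is time *)
Definition tensor := midx -> 'I_T -> R.

Definition upd (i : midx) (n : 'I_d) (k : 'I_(N n)) : midx :=
  finfun (fun m => if m == n then insubd (i m) (val k) else i m).

Definition mode_prod (G : tensor) (n : 'I_d) (M : 'M[R]_(N n)) : tensor :=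
  fun (i : midx) (t : 'I_T) => \sum_(k < N n) M (i n) k * G (upd i n k) t.

Definition mode_prods (G : tensor) (M : forall n : 'I_d, 'M[R]_(N n)) : tensor :=
  foldl (fun H n => mode_prod H n (M n)) G (enum 'I_d).

Definition tensor_sub (G H : tensor) : tensor := fun i t => G i t - H i t.

Definition frob (G : tensor) : R :=
  Num.sqrt (\sum_(i : midx) \sum_(t < T) G i t ^+ 2).

(* column indices of the mode-n unfolding: all remaining indices
   (i_m)_{m <> n} and t; realised as multi-indices whose n-th entry is 0 *)
Definition colidx (n : 'I_d) :=
  ({i : midx | nat_of_ord (i n) == 0%N} * 'I_T)%type.

Definition ncols (n : 'I_d) := #|{: colidx n}|.

(* mode-n unfolding G_(n) (columns in the fixed ordering given by enum) *)
Definition unfold (G : tensor) (n : 'I_d) : 'M[R]_(N n, ncols n) :=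
  \matrix_(a < N n, j < ncols n)
    let c := @enum_val (colidx n) predT j in G (upd (val c.1) n a) c.2.

End Tensors.

Section Matrices.
Variable R : realType.

(* full SVD  A = U diag(s) V^T, with U, V orthogonal, s nonnegative and
   nonincreasing; s k = sigma_{k+1}(A) (0-indexed), zero beyond min(m,p) *)
Definition is_svd {m p : nat} (A : 'M[R]_(m, p)) (U : 'M[R]_m) (s : nat -> R)
    (V : 'M[R]_p) : Prop :=
  [/\ U^T *m U = 1%:M, V^T *m V = 1%:M,
      (forall k, 0 <= s k) /\ (forall k l, (k <= l)%N -> s l <= s k),
      (forall k, (minn m p <= k)%N -> s k = 0) &
      A = U *m (\matrix_(i < m, j < p) if (i == j :> nat) then s i else 0) *m V^T].

Definition leading_cols {m p r : nat} (A : 'M[R]_(m, p)) (B : 'M[R]_(m, r)) : Prop :=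
  forall (i : 'I_m) (j : 'I_r) (j' : 'I_p), (j : nat) = j' -> B i j = A i j'.

(* column-pivoted (Businger-Golub) QR:  A P = Q [R11 R12], Q orthogonal,
   [R11 R12] upper trapezoidal, and the pivoting property: at step k the
   diagonal entry dominates the norms of the trailing parts of all later
   columns *)
Definition is_cpqr {r p : nat} (A : 'M[R]_(r, p)) (P : 'M[R]_p) (Q : 'M[R]_r)
    (Rm : 'M[R]_(r, p)) : Prop :=
  [/\ A *m P = Q *m Rm, Q^T *m Q = 1%:M,
      (forall (i : 'I_r) (j : 'I_p), (j < i)%N -> Rm i j = 0) &
      (forall (k : 'I_r) (k' j : 'I_p), (k : nat) = k' -> (k' <= j)%N ->
          \sum_(i < r | (k <= i)%N) Rm i j ^+ 2 <= Rm k k' ^+ 2)].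

Definition vnorm {n : nat} (x : 'cV[R]_n) : R := Num.sqrt (\sum_i x i 0 ^+ 2).

Definition spec_norm {m n : nat} (A : 'M[R]_(m, n)) : R :=
  sup [set vnorm (A *m x) | x in [set x : 'cV[R]_n | vnorm x = 1]].

End Matrices.

Arguments is_svd {R m p}.
Arguments leading_cols {R m p r}.
Arguments is_cpqr {R r p}.
Arguments vnorm {R n}.
Arguments spec_norm {R m n}.
Arguments mode_prod {R d N T}.
Arguments mode_prods {R d N T}.
Arguments tensor_sub {R d N T}.
Arguments frob {R d N T}.
Arguments unfold {R d N T}.
Arguments upd {d N}.

(* Main.v *)
Require Import Defs.
From HB Require Import structures.
From mathcomp Require Import all_boot all_order all_algebra perm.
From mathcomp Require Import boolp classical_sets reals.
From mathcomp Require Import ring lra.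
Import Order.TTheory GRing.Theory Num.Theory.
Local Open Scope ring_scope.

Section Tens.
Variables (R : realType) (d : nat) (N : 'I_d -> nat) (T : nat).
Local Notation midx := {dffun forall m : 'I_d, 'I_(N m)}.
Local Notation tensor := (tensor R d N T).

Lemma val_upd (i : midx) n k j :
  val (upd i n k j) = if j == n then val k else val (i j).
Proof.
rewrite /upd ffunE; case: (eqVneq j n) => [->|//].
by rewrite val_insubd ltn_ord.
Qed.

Lemma upd_same (i : midx) n k : upd i n k n = k.
Proof. by apply: val_inj; rewrite val_upd eqxx. Qed.

Lemma upd_other (i : midx) n m k : m != n -> upd i n k m = i m.
Proof. by move=> h; apply: val_inj; rewrite val_upd (negbTE h). Qed.

Lemma upd_upd (i : midx) n k l : upd (upd i n k) n l = upd i n l.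
Proof.
apply/ffunP => j; apply: val_inj; rewrite !val_upd.
by case: (eqVneq j n).
Qed.

Lemma upd_id (i : midx) n : upd i n (i n) = i.
Proof.
apply/ffunP => j; apply: val_inj; rewrite !val_upd.
by case: (eqVneq j n) => [->|].
Qed.

Lemma upd_comm (i : midx) n m k l : m != n ->
  upd (upd i n k) m l = upd (upd i m l) n k.
Proof.
move=> h; apply/ffunP => j; apply: val_inj; rewrite !val_upd.
case: (eqVneq j m) => [->|]; first by rewrite (negbTE h).
by case: (eqVneq j n).
Qed.

Definition tlin (a : R) (G : tensor) (b : R) (H : tensor) : tensor :=
  fun i t => a * G i t + b * H i t.

Definition tin (G H : tensor) : R := \sum_i \sum_t G i t * H i t.

Lemma tinC G H : tin G H = tin H G.
Proof. by apply: eq_bigr => i _; apply: eq_bigr => t _; rewrite mulrC. Qed.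

Lemma tin_linl a G b H K : tin (tlin a G b H) K = a * tin G K + b * tin H K.
Proof.
rewrite /tin !mulr_sumr -big_split; apply: eq_bigr => i _.
rewrite !mulr_sumr -big_split; apply: eq_bigr => t _.
by rewrite /tlin mulrDl !mulrA.
Qed.

Lemma tin_linr a G b H K : tin K (tlin a G b H) = a * tin K G + b * tin K H.
Proof. by rewrite tinC tin_linl !(tinC K). Qed.

Lemma tin_ge0 G : 0 <= tin G G.
Proof. by apply: sumr_ge0 => i _; apply: sumr_ge0 => t _; rewrite -expr2 sqr_ge0. Qed.

Lemma tensor_subE (G H : tensor) : tensor_sub G H = tlin 1 G (-1) H.
Proof. by apply: funext => i; apply: funext => t; rewrite /tlin mul1r mulN1r. Qed.

Lemma frobE (G : tensor) : frob G = Num.sqrt (tin G G).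
Proof.
by rewrite /frob /tin; under eq_bigr => i _ do under eq_bigr => t _ do rewrite expr2.
Qed.

Lemma mode_lin a (G : tensor) b (H : tensor) n (M : 'M[R]_(N n)) :
  mode_prod (tlin a G b H) n M = tlin a (mode_prod G n M) b (mode_prod H n M).
Proof.
apply: funext => i; apply: funext => t; rewrite /mode_prod /tlin.
rewrite !mulr_sumr -big_split; apply: eq_bigr => k _.
by rewrite mulrDr !mulrA ![_ * M _ _]mulrC.
Qed.

Lemma mode_comp (G : tensor) n (A B : 'M[R]_(N n)) :
  mode_prod (mode_prod G n B) n A = mode_prod G n (A *m B).
Proof.
apply: funext => i; apply: funext => t; rewrite /mode_prod.
under eq_bigr => k _ do rewrite upd_same mulr_sumr.
rewrite exchange_big /=; apply: eq_bigr => l _.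
rewrite mxE mulr_suml; apply: eq_bigr => k _.
by rewrite upd_upd mulrA.
Qed.

Lemma mode_comm (G : tensor) n m (A : 'M[R]_(N n)) (B : 'M[R]_(N m)) : m != n ->
  mode_prod (mode_prod G n A) m B = mode_prod (mode_prod G m B) n A.
Proof.
move=> h; apply: funext => i; apply: funext => t; rewrite /mode_prod.
have h' : n != m by rewrite eq_sym.
under eq_bigr => k _ do rewrite (upd_other _ _ _ _ h') mulr_sumr.
rewrite exchange_big /=; apply: eq_bigr => l _.
rewrite (upd_other _ _ _ _ h) mulr_sumr; apply: eq_bigr => k _.
by rewrite upd_comm // !mulrA [B _ _ * _]mulrC.
Qed.


Definition minner {m p : nat} (X Y : 'M[R]_(m, p)) : R :=
  \sum_a \sum_j X a j * Y a j.

Definition vn2 {m : nat} (x : 'cV[R]_m) : R := \sum_i x i 0 ^+ 2.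

Hypothesis Npos : forall n, (0 < N n)%N.

Definition z0 n : 'I_(N n) := Ordinal (Npos n).

Lemma sum_unfold n (f : midx -> 'I_T -> R) :
  \sum_i \sum_t f i t =
  \sum_(a < N n) \sum_(j < ncols d N T n)
     f (upd (val (@enum_val (colidx d N T n) predT j).1) n a)
       (@enum_val (colidx d N T n) predT j).2.
Proof.
transitivity (\sum_(a < N n) \sum_(c : colidx d N T n) f (upd (val c.1) n a) c.2);
  last first.
  by apply: eq_bigr => a _; rewrite (big_enum_val (A := predT)).
under [RHS]eq_bigr => a _ do rewrite -(pair_bigA _ (fun s t => f (upd (val s) n a) t)).
rewrite (pair_bigA _ (fun a s => \sum_t f (upd (val s) n a) t)) /=.
have hP : forall i : midx, nat_of_ord (upd i n (z0 n) n) == 0%N.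
  by move=> i; rewrite upd_same.
pose h (i : midx) : ('I_(N n) * {i : midx | nat_of_ord (i n) == 0%N})%type :=
  (i n, exist _ (upd i n (z0 n)) (hP i)).
rewrite (reindex h) /=; last first.
  apply: onW_bij; exists (fun p => upd (val p.2) n p.1).
    by move=> i; rewrite /h /= upd_upd upd_id.
  move=> [a [s hs]]; rewrite /h /= upd_same; congr pair.
  apply: val_inj => /=; rewrite upd_upd; apply/ffunP => j; apply: val_inj; rewrite val_upd.
  by case: (eqVneq j n) => [->|//]; rewrite /= (eqP hs).
by apply: eq_bigr => i _; rewrite upd_upd upd_id.
Qed.

Lemma unfold_mode (G : tensor) n (A : 'M[R]_(N n)) :
  unfold (mode_prod G n A) n = A *m unfold G n.
Proof.
apply/matrixP => a j; rewrite !mxE /mode_prod upd_same.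
by apply: eq_bigr => k _; rewrite !mxE upd_upd.
Qed.

Lemma tin_unfold (G H : tensor) n : tin G H = minner (unfold G n) (unfold H n).
Proof.
rewrite /tin (sum_unfold n (fun i t => G i t * H i t)) /minner.
by apply: eq_bigr => a _; apply: eq_bigr => j _; rewrite !mxE.
Qed.

Lemma minner_mull {m p} (A : 'M[R]_m) (X Y : 'M[R]_(m, p)) :
  minner (A *m X) Y = minner X (A^T *m Y).
Proof.
rewrite /minner.
under eq_bigr => a _ do under eq_bigr => j _ do rewrite mxE mulr_suml.
under [RHS]eq_bigr => a _ do under eq_bigr => j _ do rewrite mxE mulr_sumr.
under eq_bigr => a _ do rewrite exchange_big.
under [RHS]eq_bigr => a _ do rewrite exchange_big.
rewrite exchange_big; apply: eq_bigr => i _; apply: eq_bigr => a _.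
apply: eq_bigr => j _; rewrite mxE.
by rewrite mulrA [X _ _ * _]mulrC [_ * Y _ _]mulrC mulrA.
Qed.

Lemma tin_adj (G H : tensor) n (A : 'M[R]_(N n)) :
  tin (mode_prod G n A) H = tin G (mode_prod H n A^T).
Proof. by rewrite !(tin_unfold _ _ n) !unfold_mode minner_mull. Qed.

Lemma minner_col {m p} (Z : 'M[R]_(m, p)) : minner Z Z = \sum_j vn2 (col j Z).
Proof.
rewrite /minner exchange_big /=; apply: eq_bigr => j _; rewrite /vn2.
by apply: eq_bigr => a _; rewrite !mxE expr2.
Qed.

Lemma col_mulmx {m p q} (A : 'M[R]_(m, p)) (X : 'M[R]_(p, q)) j :
  col j (A *m X) = A *m col j X.
Proof. by rewrite !colE mulmxA. Qed.

Lemma mode_bound (G : tensor) n (A : 'M[R]_(N n)) c :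
  (forall x : 'cV_(N n), vn2 (A *m x) <= c * vn2 x) ->
  tin (mode_prod G n A) (mode_prod G n A) <= c * tin G G.
Proof.
move=> hA; rewrite !(tin_unfold _ _ n) unfold_mode !minner_col mulr_sumr.
by apply: ler_sum => j _; rewrite col_mulmx.
Qed.

End Tens.
Arguments tlin {R d N T}.
Arguments tin {R d N T}.
Arguments tinC {R d N T}.
Arguments tin_linl {R d N T}.
Arguments tin_linr {R d N T}.
Arguments tin_ge0 {R d N T}.
Arguments mode_lin {R d N T}.
Arguments mode_comp {R d N T}.
Arguments mode_comm {R d N T}.
Arguments tin_adj {R d N T}.
Arguments mode_bound {R d N T}.
Arguments unfold_mode {R d N T}.
Arguments tin_unfold {R d N T}.
Arguments frobE {R d N T}.
Arguments tensor_subE {R d N T}.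
Arguments vn2 {R m}.
Arguments minner {R m p}.
Arguments minner_mull {R m p}.
Arguments minner_col {R m p}.
Arguments col_mulmx {R m p q}.

Section Lists.
Variables (R : realType) (d : nat) (N : 'I_d -> nat) (T : nat).
Local Notation midx := {dffun forall m : 'I_d, 'I_(N m)}.
Local Notation tensor := (tensor R d N T).
Hypothesis Npos : forall n, (0 < N n)%N.



Definition Fl (l : seq 'I_d) (A : forall n, 'M[R]_(N n)) (G : tensor) : tensor :=
  foldl (fun H n => mode_prod H n (A n)) G l.

Lemma Fl_lin l A a G b H : Fl l A (tlin a G b H) = tlin a (Fl l A G) b (Fl l A H).
Proof.
elim: l G H => [//|x l IH] G H /=.
by rewrite /Fl /= -/(Fl _ _ _) mode_lin IH.
Qed.

Lemma Fl_mode_comm l A (G : tensor) x (B : 'M[R]_(N x)) : x \notin l ->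
  mode_prod (Fl l A G) x B = Fl l A (mode_prod G x B).
Proof.
elim: l G => [//|y l IH] G; rewrite inE negb_or => /andP[hxy hl].
rewrite /Fl /= -!/(Fl _ _ _) IH // mode_comm //.
Qed.

Lemma Fl_comp l A B (G : tensor) : uniq l ->
  Fl l A (Fl l B G) = Fl l (fun n => A n *m B n) G.
Proof.
elim: l G => [//|x l IH] G /= /andP[hx hl].
rewrite /Fl /= -!/(Fl _ _ _) Fl_mode_comm // IH // mode_comp //.
Qed.

Lemma Fl_adj l A (G H : tensor) : uniq l ->
  tin (Fl l A G) H = tin G (Fl l (fun n => (A n)^T) H).
Proof.
elim: l G H => [//|x l IH] G H /= /andP[hx hl].
rewrite /Fl /= -!/(Fl _ _ _) IH // tin_adj // Fl_mode_comm //.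
Qed.

Lemma Fl_bound l A (c : 'I_d -> R) (G : tensor) :
  (forall x (G : tensor), tin (mode_prod G x (A x)) (mode_prod G x (A x)) <= c x * tin G G) ->
  (forall x, 0 <= c x) ->
  tin (Fl l A G) (Fl l A G) <= (\prod_(x <- l) c x) * tin G G.
Proof.
move=> hA hc; elim: l G => [|x l IH] G; first by rewrite big_nil mul1r.
rewrite /Fl /= -!/(Fl _ _ _) big_cons.
apply: (le_trans (IH _)).
rewrite [c x * _]mulrC -mulrA ler_wpM2l //; last by apply: prodr_ge0.
Qed.

Lemma tin_lin2 a (X : tensor) b (Y : tensor) :
  tin (tlin a X b Y) (tlin a X b Y) =
  a ^+ 2 * tin X X + 2 * a * b * tin X Y + b ^+ 2 * tin Y Y.
Proof. rewrite !tin_linl !tin_linr (tinC Y X); ring. Qed.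

Lemma proj_orth x (P : 'M[R]_(N x)) (G H : tensor) : P^T = P -> P *m P = P ->
  tin (tlin 1 G (-1) (mode_prod G x P)) (mode_prod H x P) = 0.
Proof.
move=> hs hi; rewrite tin_linl (tin_adj Npos G (mode_prod H x P)) hs mode_comp hi.
ring.
Qed.

Lemma proj_contr x (P : 'M[R]_(N x)) (H : tensor) : P^T = P -> P *m P = P ->
  tin (mode_prod H x P) (mode_prod H x P) <= tin H H.
Proof.
move=> hs hi.
have eH : tin H H = tin (tlin 1 (tlin 1 H (-1) (mode_prod H x P)) 1 (mode_prod H x P))
                        (tlin 1 (tlin 1 H (-1) (mode_prod H x P)) 1 (mode_prod H x P)).
  congr tin; by apply: funext => i; apply: funext => t; rewrite /tlin; ring.
rewrite eH tin_lin2 proj_orth // expr1n !mul1r mulr0 addr0 lerDr; exact: tin_ge0.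
Qed.

Lemma Fl_tele l (P : forall n, 'M[R]_(N n)) (G : tensor) : uniq l ->
  (forall n, (P n)^T = P n) -> (forall n, P n *m P n = P n) ->
  tin (tlin 1 G (-1) (Fl l P G)) (tlin 1 G (-1) (Fl l P G)) <=
  \sum_(x <- l) tin (tlin 1 G (-1) (mode_prod G x (P x)))
                    (tlin 1 G (-1) (mode_prod G x (P x))).
Proof.
move=> + hs hi; elim: l G => [|x l IH] G /=.
  have -> : tlin 1 G (-1) (Fl [::] P G) = tlin 0 G 0 G.
    by apply: funext => i; apply: funext => t; rewrite /tlin /Fl /=; ring.
  by rewrite big_nil tin_linl !mul0r addr0.
move=> /andP[hx hl]; rewrite big_cons /Fl /= -!/(Fl _ _ _).
set Hh := tlin 1 G (-1) (Fl l P G).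
have e : tlin 1 G (-1) (Fl l P (mode_prod G x (P x))) =
   tlin 1 (tlin 1 G (-1) (mode_prod G x (P x))) 1 (mode_prod Hh x (P x)).
  rewrite /Hh mode_lin Fl_mode_comm //.
  by apply: funext => i; apply: funext => t; rewrite /tlin; ring.
rewrite e tin_lin2 proj_orth // mulr0 addr0 expr1n !mul1r lerD2l.
apply: (le_trans (proj_contr x (P x) Hh (hs x) (hi x))); exact: IH.
Qed.

End Lists.
Arguments Fl {R d N T}.
Arguments Fl_lin {R d N T}.
Arguments Fl_comp {R d N T}.
Arguments Fl_adj {R d N T}.
Arguments Fl_bound {R d N T}.
Arguments Fl_tele {R d N T}.
Arguments Fl_mode_comm {R d N T}.
Arguments tin_lin2 {R d N T}.
Arguments proj_orth {R d N T}.
Arguments proj_contr {R d N T}.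

Section Mat.
Variable R : realType.

Lemma vn2E {m} (x : 'cV[R]_m) : vn2 x = (x^T *m x) 0 0.
Proof. by rewrite /vn2 mxE; apply: eq_bigr => i _; rewrite !mxE expr2. Qed.

Lemma vn2_ge0 {m} (x : 'cV[R]_m) : 0 <= vn2 x.
Proof. by apply: sumr_ge0 => i _; apply: sqr_ge0. Qed.

Lemma vnormE {m} (x : 'cV[R]_m) : vnorm x = Num.sqrt (vn2 x).
Proof. by []. Qed.

Lemma vn2_iso {m q} (Q : 'M[R]_(m, q)) x : Q^T *m Q = 1%:M -> vn2 (Q *m x) = vn2 x.
Proof. by move=> h; rewrite !vn2E trmx_mul mulmxA -(mulmxA _ Q^T) h mulmx1. Qed.

Lemma vn2_coiso {m q} (Q : 'M[R]_(m, q)) (w : 'cV[R]_m) :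
  Q^T *m Q = 1%:M -> vn2 (Q^T *m w) <= vn2 w.
Proof.
move=> h; set Pm := Q *m Q^T.
have hPt : (1%:M - Pm)^T = 1%:M - Pm by rewrite linearB /= trmx1 trmx_mul trmxK.
have hPP : (1%:M - Pm) *m (1%:M - Pm) = 1%:M - Pm.
  rewrite mulmxBl mul1mx mulmxBr mulmx1.
  have -> : Pm *m Pm = Pm by rewrite /Pm mulmxA -(mulmxA Q) h mulmx1.
  by rewrite subrr subr0.
have e2 : ((1%:M - Pm) *m w)^T *m ((1%:M - Pm) *m w) = w^T *m ((1%:M - Pm) *m w).
  by rewrite trmx_mul hPt -mulmxA (mulmxA (1%:M - Pm)) hPP.
have e3 : (Q^T *m w)^T *m (Q^T *m w) = w^T *m (Pm *m w).
  by rewrite trmx_mul trmxK /Pm !mulmxA.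
have e1 : w^T *m w = (Q^T *m w)^T *m (Q^T *m w) + ((1%:M - Pm) *m w)^T *m ((1%:M - Pm) *m w).
  by rewrite e2 e3 -mulmxDr -mulmxDl addrC subrK mul1mx.
rewrite [in leRHS]vn2E e1 mxE -!vn2E lerDl; exact: vn2_ge0.
Qed.

Lemma vn2Z {m} (a : R) (x : 'cV[R]_m) : vn2 (a *: x) = a ^+ 2 * vn2 x.
Proof. by rewrite /vn2 mulr_sumr; apply: eq_bigr => i _; rewrite mxE exprMn. Qed.

Lemma vnormZ {m} (a : R) (x : 'cV[R]_m) : vnorm (a *: x) = `|a| * vnorm x.
Proof. by rewrite !vnormE vn2Z sqrtrM ?sqr_ge0 // sqrtr_sqr. Qed.

Lemma vn2_eq0 {m} (x : 'cV[R]_m) : vn2 x = 0 -> x = 0.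
Proof.
move=> h; apply/matrixP => i j; rewrite (ord1 j) mxE.
have := (psumr_eq0P (fun i _ => sqr_ge0 (x i 0)) h) i isT.
by move/eqP; rewrite sqrf_eq0 => /eqP.
Qed.

Lemma entry_le1 {m} (x : 'cV[R]_m) j : vn2 x = 1 -> `|x j 0| <= 1.
Proof.
move=> h; rewrite -(expr_le1 (n := 2)) // real_normK ?num_real // -h /vn2.
rewrite (bigD1 j) //= lerDl; apply: sumr_ge0 => i _; exact: sqr_ge0.
Qed.

Lemma spec_has_sup {m q} (M : 'M[R]_(m, q)) : (0 < q)%N ->
  has_sup [set vnorm (M *m x) | x in [set x : 'cV[R]_q | vnorm x = 1]].
Proof.
move=> hq; split.
  exists (vnorm (M *m delta_mx (Ordinal hq) 0)); exists (delta_mx (Ordinal hq) 0) => //.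
  rewrite /= vnormE /vn2 (bigD1 (Ordinal hq)) //= big1 ?mxE ?eqxx ?expr1n ?addr0 ?sqrtr1 //.
  by move=> i hi; rewrite mxE (negbTE hi) /= expr0n.
exists (Num.sqrt (\sum_i (\sum_j `|M i j|) ^+ 2)) => y [x /= hx <-].
have hx2 : vn2 x = 1.
  by move: hx; rewrite vnormE => /(congr1 (fun t => t ^+ 2)); rewrite sqr_sqrtr ?vn2_ge0 // expr1n.
rewrite vnormE ler_sqrt; last by apply: sumr_ge0 => i _; apply: sqr_ge0.
apply: ler_sum => i _; rewrite mxE.
have h1 : `|\sum_j M i j * x j 0| <= \sum_j `|M i j|.
  apply: (le_trans (ler_norm_sum _ _ _)); apply: ler_sum => j _.
  by rewrite normrM ler_piMr // entry_le1.
have h0 : 0 <= `|\sum_j M i j * x j 0| by [].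
rewrite -real_normK ?num_real //; nra.
Qed.

Lemma spec_ub {m q} (M : 'M[R]_(m, q)) (w : 'cV[R]_q) : (0 < q)%N ->
  vnorm (M *m w) <= spec_norm M * vnorm w.
Proof.
move=> hq; have [h0|hne] := eqVneq (vn2 w) 0.
  by rewrite (vn2_eq0 w h0) mulmx0 !vnormE /vn2 !big1 ?sqrtr0 ?mulr0 // => i _; rewrite mxE expr0n.
have hc : 0 < vnorm w.
  rewrite vnormE lt_neqAle sqrtr_ge0 andbT eq_sym sqrtr_eq0 -ltNge lt_neqAle eq_sym hne.
  exact: vn2_ge0.
have hx : vnorm ((vnorm w)^-1 *: w) = 1.
  by rewrite vnormZ ger0_norm ?invr_ge0 ?ltW // mulVf // gt_eqF.
have := sup_upper_bound (spec_has_sup M hq) (ex_intro2 _ _ _ hx erefl).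
rewrite -scalemxAr vnormZ ger0_norm; last by rewrite invr_ge0 ltW.
rewrite ler_pdivrMl // mulrC; by rewrite /spec_norm.
Qed.

Lemma spec_ge0 {m q} (M : 'M[R]_(m, q)) : (0 < q)%N -> 0 <= spec_norm M.
Proof.
move=> hq; have [[y [x hx _]] _] := spec_has_sup M hq.
apply: le_trans (sup_upper_bound (spec_has_sup M hq) (ex_intro2 _ _ x hx erefl)).
exact: sqrtr_ge0.
Qed.

Lemma spec_vn2 {m q} (M : 'M[R]_(m, q)) (w : 'cV[R]_q) : (0 < q)%N ->
  vn2 (M *m w) <= spec_norm M ^+ 2 * vn2 w.
Proof.
move=> hq; have h := spec_ub M w hq.
have h0 : 0 <= vnorm (M *m w) by apply: sqrtr_ge0.
have h1 : 0 <= vnorm w by apply: sqrtr_ge0.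
rewrite -(sqr_sqrtr (vn2_ge0 (M *m w))) -(sqr_sqrtr (vn2_ge0 w)) -!vnormE.
have hs := spec_ge0 M hq.
nra.
Qed.

End Mat.
Arguments vn2E {R m}.
Arguments vn2_ge0 {R m}.
Arguments vn2_iso {R m q}.
Arguments vn2_coiso {R m q}.
Arguments vn2Z {R m}.
Arguments spec_vn2 {R m q}.
Arguments spec_ge0 {R m q}.
Arguments spec_ub {R m q}.

Section Sel.
Variable R : realType.

Definition Esel m r : 'M[R]_(m, r) := \matrix_(i, j) ((i : nat) == j)%:R.

Lemma sum_delta m (a : nat) (g : nat -> R) :
  \sum_(c < m) (a == c)%:R * g c = if (a < m)%N then g a else 0.
Proof.
case: ifP => ha.
  rewrite (bigD1 (Ordinal ha)) //= eqxx mul1r big1 ?addr0 // => c hc.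
  suff -> : (a == c) = false by rewrite mul0r.
  by apply/negbTE; apply: contra hc => /eqP e; apply/eqP/val_inj.
rewrite big1 // => c _; case: eqP => [e|]; last by rewrite mul0r.
by move: ha; rewrite e ltn_ord.
Qed.

Lemma leading_colsE {m p r} (A : 'M[R]_(m, p)) (B : 'M[R]_(m, r)) :
  (r <= p)%N -> leading_cols A B -> B = A *m Esel p r.
Proof.
move=> hr hB; apply/matrixP => i j; rewrite mxE.
rewrite (hB i j (widen_ord hr j)) //.
under eq_bigr => k _ do rewrite mxE mulrC.
rewrite (bigD1 (widen_ord hr j)) //= eqxx mul1r big1 ?addr0 // => k hk.
suff -> : ((k : nat) == j) = false by rewrite mul0r.
by apply/negbTE; apply: contra hk => /eqP e; apply/eqP/val_inj.
Qed.

Lemma EselTE m r : (r <= m)%N -> (Esel m r)^T *m Esel m r = 1%:M.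
Proof.
move=> hr; apply/matrixP => a b; rewrite !mxE.
under eq_bigr => k _ do rewrite !mxE eq_sym.
rewrite (sum_delta m a (fun k => (k == b)%:R)) (leq_trans (ltn_ord a) hr).
by [].
Qed.

Lemma minner_tr {m p} (Z : 'M[R]_(m, p)) : minner Z Z = \tr (Z^T *m Z).
Proof.
rewrite /minner /mxtrace exchange_big /=; apply: eq_bigr => j _.
by rewrite mxE; apply: eq_bigr => a _; rewrite mxE.
Qed.

Lemma tr_orth {m p} (U : 'M[R]_m) (V : 'M[R]_p) (Y : 'M[R]_(m, p)) :
  U^T *m U = 1%:M -> V^T *m V = 1%:M ->
  \tr ((U *m Y *m V^T)^T *m (U *m Y *m V^T)) = \tr (Y^T *m Y).
Proof.
move=> hU hV; rewrite !trmx_mul trmxK.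
have -> : V *m (Y^T *m U^T) *m (U *m Y *m V^T) = V *m (Y^T *m Y *m V^T).
  by rewrite -!mulmxA (mulmxA U^T) hU mul1mx.
by rewrite mxtrace_mulC -(mulmxA _ V^T) hV mulmx1.
Qed.

Definition Dmx {m p} (s : nat -> R) : 'M[R]_(m, p) :=
  \matrix_(i < m, j < p) if (i == j :> nat) then s i else 0.

Lemma Y_entry {m p r} (s : nat -> R) (a : 'I_m) (j : 'I_p) : (r <= m)%N ->
  (Dmx s - Esel m r *m ((Esel m r)^T *m Dmx s)) a j =
  if (r <= a)%N then (if (a == j :> nat) then s a else 0) else 0.
Proof.
move=> hr; rewrite !mxE.
under eq_bigr => c _ do rewrite !mxE.
have e : forall c : 'I_r, \sum_k (Esel m r)^T c k * Dmx s k j =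
    (if ((c : nat) == j :> nat) then s c else 0).
  move=> c; under eq_bigr => k _ do rewrite !mxE eq_sym.
  rewrite (sum_delta m c (fun k => if k == j :> nat then s k else 0)).
  by rewrite (leq_trans (ltn_ord c) hr).
under eq_bigr => c _ do rewrite e.
rewrite (sum_delta r a (fun c => if c == j :> nat then s c else 0)).
by rewrite ltnNge; case: (r <= a)%N; rewrite /= ?subr0 ?subrr.
Qed.

Lemma tail_mx {m p r} (U : 'M[R]_m) (V : 'M[R]_p) (s : nat -> R) (X : 'M[R]_(m, p)) :
  (r <= m)%N -> U^T *m U = 1%:M -> V^T *m V = 1%:M ->
  (forall k, (minn m p <= k)%N -> s k = 0) ->
  X = U *m Dmx s *m V^T ->
  minner (X - (U *m Esel m r) *m (U *m Esel m r)^T *m X)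
         (X - (U *m Esel m r) *m (U *m Esel m r)^T *m X) =
  \sum_(r <= k < minn m p) s k ^+ 2.
Proof.
move=> hr hU hV hs hX.
have -> : X - (U *m Esel m r) *m (U *m Esel m r)^T *m X =
    U *m (Dmx s - Esel m r *m ((Esel m r)^T *m Dmx s)) *m V^T.
  rewrite hX trmx_mul !mulmxA -(mulmxA (U *m Esel m r *m (Esel m r)^T) U^T U) hU mulmx1.
  by rewrite mulmxBr mulmxBl !mulmxA.
rewrite minner_tr tr_orth // -minner_tr /minner.
under eq_bigr => a _ do under eq_bigr => j _ do rewrite Y_entry //.
have e : forall a : 'I_m, \sum_(j < p) (if (r <= a)%N then (if (a == j :> nat) then s a else 0) else 0) *
    (if (r <= a)%N then (if (a == j :> nat) then s a else 0) else 0) =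
    if (r <= a)%N then s a ^+ 2 else 0.
  move=> a; transitivity (\sum_(j < p) ((a : nat) == j)%:R * (if (r <= a)%N then s a ^+ 2 else 0)).
    apply: eq_bigr => j _; case: (r <= a)%N; case: eqP => _ /=;
      by rewrite ?mul1r ?mul0r ?mulr0 ?expr2.
  rewrite (sum_delta p a (fun _ => if (r <= a)%N then s a ^+ 2 else 0)).
  case: ifP => // hap; case: ifP => // _.
  by rewrite hs ?expr0n // geq_min; apply/orP; right; rewrite leqNgt hap.
under eq_bigr => a _ do rewrite e.
rewrite -(big_mkord xpredT (fun a => if (r <= a)%N then s a ^+ 2 else 0)).
rewrite (big_cat_nat (leq0n r) hr) /= big_nat_cond big1 ?add0r; last first.
  by move=> i /andP[/andP[_ hi] _]; rewrite leqNgt hi.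
rewrite (eq_big_nat _ _ (F2 := fun k => s k ^+ 2)); last by move=> i /andP[-> _].
have [hrm|hrm] := leqP r (minn m p).
  rewrite (big_cat_nat hrm (geq_minl m p)) /=.
  have -> : \sum_(minn m p <= i < m) s i ^+ 2 = 0.
    by rewrite big_nat_cond big1 // => i /andP[/andP[hi _] _]; rewrite hs ?expr0n.
  by rewrite addr0.
rewrite [in RHS]big_geq ?(ltnW hrm) // big_nat_cond big1 //.
by move=> i /andP[/andP[hi _] _]; rewrite hs ?expr0n // (ltnW (leq_trans hrm hi)).
Qed.

End Sel.
Arguments Esel {R}.
Arguments EselTE {R}.
Arguments leading_colsE {R m p r}.
Arguments tail_mx {R m p r}.
Arguments Dmx {R m p}.

Lemma unfold_tlin (R : realType) d N T a (G : tensor R d N T) b H n :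
  unfold (tlin a G b H) n = a *: unfold G n + b *: unfold H n.
Proof. by apply/matrixP => i j; rewrite !mxE. Qed.

Lemma Fl_ext0 (R : realType) d (N : 'I_d -> nat) T l (A B : forall n, 'M[R]_(N n)) (G : tensor R d N T) :
  (forall n, A n = B n) -> Fl l A G = Fl l B G.
Proof.
move=> h; elim: l G => [//|x l IH] G.
by rewrite /Fl /= -!/(Fl _ _ _) h IH.
Qed.

Arguments Fl_ext0 {R d N T l A B G}.

Theorem theorem1 (R : realType) (d : nat) (N : 'I_d -> nat) (T : nat)
    (r : 'I_d -> nat) (G : tensor R d N T)
    (U : forall n : 'I_d, 'M[R]_(N n)) (s : 'I_d -> nat -> R)
    (V : forall n : 'I_d, 'M[R]_(ncols d N T n))
    (Phi : forall n : 'I_d, 'M[R]_(N n, r n))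
    (sigma : forall n : 'I_d, 'S_(N n))
    (Q : forall n : 'I_d, 'M[R]_(r n)) (Rf : forall n : 'I_d, 'M[R]_(r n, N n))
    (S : forall n : 'I_d, 'M[R]_(N n, r n)) :
  (0 < d)%N ->
  (forall n, (1 <= r n)%N /\ (r n < N n)%N) ->
  (forall n, is_svd (unfold G n) (U n) (s n) (V n)) ->
  (forall n, leading_cols (U n) (Phi n)) ->
  (forall n, is_cpqr (Phi n)^T (perm_mx (sigma n)) (Q n) (Rf n)) ->
  (forall n, leading_cols (perm_mx (sigma n) : 'M[R]_(N n)) (S n)) ->
  (forall n, (S n)^T *m Phi n \in unitmx) ->
  let Pi := fun n => Phi n *m invmx ((S n)^T *m Phi n) *m (S n)^T in
  frob (tensor_sub G (mode_prods G Pi))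
    <= (\prod_(n < d) spec_norm (invmx ((S n)^T *m Phi n)))
       * Num.sqrt (\sum_(n < d) \sum_(r n <= k < minn (N n) (ncols d N T n)) s n k ^+ 2).
Proof.
move=> hd hr hsvd hlc hqr hSl hinv; cbv zeta.
set Pi := (fun n : 'I_d => Phi n *m invmx ((S n)^T *m Phi n) *m (S n)^T).
have hr1 n : (0 < r n)%N by case: (hr n).
have rle n : (r n <= N n)%N by case: (hr n) => _ /ltnW.
have Npos n : (0 < N n)%N by apply: leq_trans (hr1 n) (rle n).
have hU n : (U n)^T *m U n = 1%:M by case: (hsvd n).
have hPhi n : Phi n = U n *m Esel (N n) (r n) := leading_colsE _ _ (rle n) (hlc n).
have hPhiO n : (Phi n)^T *m Phi n = 1%:M.
  by rewrite hPhi trmx_mul mulmxA -(mulmxA _ _ (U n)) hU mulmx1 EselTE.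
have hSE n : S n = perm_mx (sigma n) *m Esel (N n) (r n) := leading_colsE _ _ (rle n) (hSl n).
have hST n (x : 'cV[R]_(N n)) : vn2 ((S n)^T *m x) <= vn2 x.
  rewrite hSE trmx_mul -mulmxA.
  apply: le_trans (vn2_coiso _ _ (EselTE _ _ (rle n))) _.
  by rewrite vn2_iso // trmxK tr_perm_mx -perm_mxM mulgV perm_mx1.
pose Mi n := invmx ((S n)^T *m Phi n).
pose ka n := spec_norm (Mi n).
have hMi n : (S n)^T *m Phi n *m Mi n = 1%:M := mulmxV (hinv n).
have hMi' n : Mi n *m ((S n)^T *m Phi n) = 1%:M := mulVmx (hinv n).
have hka0 n : 0 <= ka n := spec_ge0 (Mi n) (hr1 n).
have hPiv n (x : 'cV[R]_(N n)) : vn2 (Pi n *m x) <= ka n ^+ 2 * vn2 x.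
  have -> : Pi n *m x = Phi n *m (Mi n *m ((S n)^T *m x)) by rewrite /Pi !mulmxA.
  rewrite vn2_iso //; apply: le_trans (spec_vn2 _ _ (hr1 n)) _.
  by rewrite ler_wpM2l ?sqr_ge0.
have hka1 n : 1 <= ka n.
  pose e : 'cV[R]_(r n) := delta_mx (Ordinal (hr1 n)) 0.
  have he : vn2 e = 1.
    rewrite /vn2 (bigD1 (Ordinal (hr1 n))) //= big1 ?mxE ?eqxx ?expr1n ?addr0 //.
    by move=> i hi; rewrite mxE (negbTE hi) /= expr0n.
  have h1 : vn2 e <= vn2 (Mi n *m e).
    have {1}-> : e = (S n)^T *m (Phi n *m (Mi n *m e)) by rewrite !mulmxA hMi mul1mx.
    apply: le_trans (hST n _) _; rewrite vn2_iso //.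
  have h2 := spec_vn2 (Mi n) e (hr1 n).
  have h0 := hka0 n.
  rewrite he in h1 h2; rewrite -/(ka n) in h2; nra.
have ePi n : Pi n = Phi n *m Mi n *m (S n)^T by [].
pose Pm n := Phi n *m (Phi n)^T.
have hPs n : (Pm n)^T = Pm n by rewrite /Pm trmx_mul trmxK.
have hPP n : Pm n *m Pm n = Pm n by rewrite /Pm mulmxA -(mulmxA (Phi n)) hPhiO mulmx1.
have hPiP n : Pi n *m Pm n = Pm n.
  by rewrite ePi /Pm !mulmxA -(mulmxA (Phi n *m Mi n) _ (Phi n)) -(mulmxA (Phi n)) hMi' mulmx1.
have hPPi n : Pm n *m Pi n = Pi n.
  by rewrite ePi /Pm !mulmxA -(mulmxA (Phi n) _ (Phi n)) hPhiO mulmx1.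
have hPiPi n : Pi n *m Pi n = Pi n.
  by rewrite ePi !mulmxA -(mulmxA (Phi n *m Mi n) (S n)^T (Phi n)) -(mulmxA (Phi n) (Mi n)) hMi' mulmx1.
have hmPi n (H : tensor R d N T) :
    tin (mode_prod H n (Pi n)) (mode_prod H n (Pi n)) <= ka n ^+ 2 * tin H H.
  exact: mode_bound Npos H n (Pi n) _ (hPiv n).
have htail n : tin (tlin 1 G (-1) (mode_prod G n (Pm n))) (tlin 1 G (-1) (mode_prod G n (Pm n)))
    = \sum_(r n <= k < minn (N n) (ncols d N T n)) s n k ^+ 2.
  rewrite (tin_unfold Npos _ _ n) unfold_tlin unfold_mode.
  have -> : 1 *: unfold G n + (-1) *: (Pm n *m unfold G n) =
      unfold G n - (U n *m Esel (N n) (r n)) *m (U n *m Esel (N n) (r n))^T *m unfold G n.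
    by rewrite scale1r scaleN1r /Pm hPhi.
  case: (hsvd n) => _ hV _ hs hX.
  exact: tail_mx (rle n) (hU n) hV hs hX.
set l := enum 'I_d.
have ul : uniq l := enum_uniq _.
have eF : mode_prods G Pi = Fl l Pi G by [].
set y := tlin 1 G (-1) (Fl l Pm G).
set w := Fl l Pi y.
have hw : w = tlin 1 (Fl l Pi G) (-1) (Fl l Pm G).
  by rewrite /w /y Fl_lin Fl_comp // (Fl_ext0 hPiP).
have eE : tlin 1 G (-1) (Fl l Pi G) = tlin 1 y (-1) w.
  by rewrite hw /y; apply: funext => i; apply: funext => t; rewrite /tlin; ring.
have horth : tin y w = 0.
  have -> : w = Fl l Pm w by rewrite {2}/w Fl_comp // (Fl_ext0 hPPi).
  rewrite tinC (Fl_adj Npos) // (Fl_ext0 hPs) /y Fl_lin Fl_comp // (Fl_ext0 hPP).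
  by rewrite tin_linr; ring.
pose u := tin y y; pose v := tin w w.
have hEE : tin (tlin 1 G (-1) (Fl l Pi G)) (tlin 1 G (-1) (Fl l Pi G)) = u + v.
  by rewrite eE tin_lin2 horth /u /v; ring.
have hFw : Fl l Pi w = w by rewrite /w Fl_comp // (Fl_ext0 hPiPi).
pose K2 := \prod_(x <- l) ka x ^+ 2.
have hbound (H : tensor R d N T) : tin (Fl l Pi H) (Fl l Pi H) <= K2 * tin H H.
  exact: Fl_bound l Pi (fun x => ka x ^+ 2) H hmPi (fun x => sqr_ge0 _).
have hK1 : 1 <= K2.
  suff : forall l0 : seq 'I_d, 1 <= \prod_(x <- l0) ka x ^+ 2 by apply.
  elim=> [|x l' IH]; first by rewrite big_nil.
  rewrite big_cons; apply: mulr_ege1 => //.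
  by have := hka1 x; rewrite expr2; nra.
pose z := tlin v y u w.
have hz1 : Fl l Pi z = tlin v w u w by rewrite /z Fl_lin -/w hFw.
have hz2 : tin (tlin v w u w) (tlin v w u w) = (u + v) ^+ 2 * v.
  by rewrite tin_lin2 -/v; ring.
have hz3 : tin z z = v ^+ 2 * u + u ^+ 2 * v.
  by rewrite /z tin_lin2 horth -/u -/v; ring.
have key : (u + v) ^+ 2 * v <= K2 * (v ^+ 2 * u + u ^+ 2 * v).
  by rewrite -hz2 -hz3 -hz1; exact: hbound.
have u0 : 0 <= u := tin_ge0 _.
have v0 : 0 <= v := tin_ge0 _.
have huv : u + v <= K2 * u.
  have [->|vne] := eqVneq v 0; first by rewrite addr0; nra.
  have vpos : 0 < v by rewrite lt_neqAle eq_sym vne v0.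
  have hpos : 0 < (u + v) * v by apply: mulr_gt0 => //; apply: ltr_wpDl.
  nra.
have hu : u <= \sum_(n < d) \sum_(r n <= k < minn (N n) (ncols d N T n)) s n k ^+ 2.
  apply: le_trans (Fl_tele Npos l Pm G ul hPs hPP) _.
  rewrite -big_enum /= -/l le_eqVlt; apply/orP; left; apply/eqP.
  by apply: eq_bigr => n _; rewrite htail.
rewrite eF tensor_subE frobE hEE.
have hK : \prod_(n < d) spec_norm (invmx ((S n)^T *m Phi n)) = Num.sqrt K2.
  rewrite /K2 prodrXl sqrtr_sqr ger0_norm; last by apply: prodr_ge0 => x _.
  by rewrite /l big_enum.
rewrite hK -sqrtrM; last by apply: le_trans hK1.
rewrite ler_sqrt; last first.
  apply: mulr_ge0; first by apply: le_trans hK1.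
  by apply: sumr_ge0 => n _; apply: sumr_ge0 => k _; apply: sqr_ge0.
apply: le_trans huv _; rewrite ler_wpM2l //; exact: le_trans hK1.
Qed.
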